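(* Let $(X,\|\cdot\|)$ be a Banach space, $A,B\subset X$ nonempty, and suppose $A$ is a uniformly convex set. Then the ordered pair $(A,B)$ has the $UC$ property.
   Context: The metric is $\rho(x,y)=\|x-y\|$; $\mathrm{dist}(A,B)=\inf\{\|a-b\|:a\in A,b\in B\}$; $B(x_0,r)=\{x\in X:\|x-x_0\|<r\}$. A set $A\subset X$ is a uniformly convex set if for every $\varepsilon>0$ there exists $\eta(\varepsilon)>0$ such that for all $x,y\in A$ with $\|x-y\|\ge\varepsilon$ one has $B\left(\frac{x+y}{2},\eta(\varepsilon)\right)\subset A$. The ordered pair $(A,B)$ has the $UC$ property if for all sequences $\{x_n\},\{z_n\}\subset A$, $\{y_n\}\subset B$ with $\lim_n\|x_n-y_n\|=\lim_n\|z_n-y_n\|=\mathrm{dist}(A,B)$ one has $\lim_n\|x_n-z_n\|=0$. *)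

(* Defs.v *)
From HB Require Import structures.
From mathcomp Require Import all_boot all_order all_algebra.
From mathcomp Require Import all_classical all_reals all_analysis.
Set Implicit Arguments. Unset Strict Implicit. Unset Printing Implicit Defensive.
Import Order.TTheory GRing.Theory Num.Theory.
Import numFieldNormedType.Exports.
Local Open Scope classical_set_scope.
Local Open Scope ring_scope.

Definition setdist {R : realType} {X : normedModType R} (A B : set X) : R :=
  inf [set `|a - b| | a in A & b in B].

Definition nball {R : realType} {X : normedModType R} (x0 : X) (r : R) : set X :=
  [set x | `|x - x0| < r].

Definition unif_convex_set {R : realType} {X : normedModType R} (A : set X) : Prop :=
  forall eps : R, 0 < eps -> exists eta : R, 0 < eta /\
    forall x y, A x -> A y -> eps <= `|x - y| ->
      nball ((2%:R)^-1 *: (x + y)) eta `<=` A.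

Definition UC_property {R : realType} {X : normedModType R} (A B : set X) : Prop :=
  forall (x z : nat -> X) (y : nat -> X),
    (forall n, A (x n)) -> (forall n, A (z n)) -> (forall n, B (y n)) ->
    (fun n => `|x n - y n|) @ \oo --> setdist A B ->
    (fun n => `|z n - y n|) @ \oo --> setdist A B ->
    (fun n => `|x n - z n|) @ \oo --> (0 : R).

(* Main.v *)
Require Import Defs.
From HB Require Import structures.
From mathcomp Require Import all_boot all_order all_algebra.
From mathcomp Require Import all_classical all_reals all_analysis.
From mathcomp Require Import lra.
Import Order.TTheory GRing.Theory Num.Theory.
Import numFieldNormedType.Exports.
Local Open Scope classical_set_scope.
Local Open Scope ring_scope.

Lemma setdist_le (R : realType) (X : normedModType R) (A B : set X) a b :
  A a -> B b -> setdist A B <= `|a - b|.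
Proof.
move=> Aa Bb; rewrite /setdist.
apply: ge_inf; last by exists a => //; exists b.
by exists 0 => _ [a' _ [b' _ <-]].
Qed.

Arguments setdist_le {R X A B a b}.

Theorem theorem37 (R : realType) (X : completeNormedModType R) (A B : set X) :
  A !=set0 -> B !=set0 -> unif_convex_set A -> UC_property A B.
Proof.
move=> _ _ uc x z y Ax Az By cx cz.
apply/cvgr0Pnorm_lt => eps eps0.
have [eta [eta0 Heta]] := uc eps eps0.
set d := setdist A B.
set c := Num.min (eta / 2) (eps / 2).
have c0 : 0 < c by rewrite lt_min; apply/andP; split; lra.
have c1 : c <= eta / 2 by rewrite ge_min lexx.
have c2 : c <= eps / 2 by rewrite ge_min lexx orbT.
have dc : d < d + c by lra.
near=> n.
have hx : `|x n - y n| < d + c by near: n; exact: cvgr_lt cx _ dc.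
have hz : `|z n - y n| < d + c by near: n; exact: cvgr_lt cz _ dc.
rewrite normr_id ltNge; apply/negP => hxz.
set m := 2%:R^-1 *: (x n + z n).
have hm : `|m - y n| <= (`|x n - y n| + `|z n - y n|) / 2.
  have -> : m - y n = 2%:R^-1 *: ((x n - y n) + (z n - y n)).
    rewrite /m [in RHS]scalerDr !scalerBr [in RHS]addrACA -opprD -scalerDl scalerDr.
    have -> : (2%:R^-1 + 2%:R^-1 : R) = 1 by rewrite [RHS](splitr 1) mul1r.
    by rewrite scale1r.
  rewrite normrZ ger0_norm ?invr_ge0 // mulrC.
  by rewrite ler_pM2r ?invr_gt0 // ler_normD.
have hxz' : `|x n - z n| <= `|x n - y n| + `|z n - y n|.
  have -> : x n - z n = (x n - y n) - (z n - y n) by rewrite opprB addrA subrK.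
  by rewrite (le_trans (ler_normB _ _)).
have d0 : 0 <= d.
  rewrite /d /setdist; apply: lb_le_inf.
    have [a Aa] : A !=set0 by exists (x 0%N).
    by exists `|a - y 0%N|; exists a => //; exists (y 0%N).
  by move=> _ [a' _ [b' _ <-]].
have [mlt|mge] := ltP `|m - y n| eta.
  have Ay : A (y n).
    apply: (Heta _ _ (Ax n) (Az n) hxz).
    by rewrite /nball /= -normrN opprB.
  have := setdist_le Ay (By n); rewrite subrr normr0 -/d => dle0.
  lra.
set k := (eta / 2) / `|m - y n|.
have my0 : 0 < `|m - y n| by exact: (lt_le_trans eta0 mge).
set w := m + k *: (y n - m).
have Aw : A w.
  apply: (Heta _ _ (Ax n) (Az n) hxz).
  rewrite /nball /= /w addrAC subrr add0r normrZ -normrN opprB.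
  rewrite ger0_norm; last by rewrite divr_ge0 // ?ltW // divr_gt0.
  by rewrite mulfVK ?gt_eqF //; lra.
have := setdist_le Aw (By n); rewrite -/d.
have -> : w - y n = (1 - k) *: (m - y n).
  by rewrite /w scalerBl scale1r -scalerN opprB addrAC.
rewrite normrZ ger0_norm; last first.
  rewrite subr_ge0 /k ler_pdivrMr // mul1r; lra.
rewrite mulrBl mul1r /k mulfVK ?gt_eqF //.
lra.
Unshelve. all: by end_near.
Qed.
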